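(* Let $T\in\{0,1\}$ and $\hat Y\in\{0,1\}$ be binary random variables on a common probability space, where $T$ is the treatment (intervention) variable and $\hat Y$ is the indicator outcome defined below, and suppose $\mathbb{P}(T=1)=\mathbb{P}(T=0)=\tfrac12$ and all conditional probabilities and denominators below are well defined (nonzero conditioning events). Assume $\hat Y$ is monotonic with respect to $T$. Define $$\delta_{\mathrm{ADCE}} := \mathbb{P}(\hat Y=1\mid T=1, s(T=1)) - \mathbb{P}(\hat Y=1\mid T=0, s(T=0)),$$ $$\delta_{\mathrm{PN}} := \frac{\mathbb{P}(\hat Y=0)-\mathbb{P}(\hat Y=0\mid \mathrm{do}(T=1))}{\mathbb{P}(T=0,\hat Y=0)},\qquad \delta_{\mathrm{PS}} := \frac{\mathbb{P}(\hat Y=0\mid \mathrm{do}(T=0))-\mathbb{P}(\hat Y=0)}{\mathbb{P}(T=1,\hat Y=1)},$$ and set $\alpha:=\mathbb{P}(\hat Y=1\mid T=1,s(T=1))$ and $\beta:=\mathbb{P}(\hat Y=0\mid T=0,s(T=0))$. Then $$\delta_{\mathrm{ADCE}} = \frac{\alpha}{2}\,\delta_{\mathrm{PS}} + \frac{\beta}{2}\,\delta_{\mathrm{PN}}.$$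
   Context: Setting: an input question $x$ to a language model is decomposed into a deep structure $d$ (core semantics) and a surface structure $s$ (presentation form); the model output is $Y(x)$, and $Y^{\mathrm{origin}}$ denotes the output on the unintervened input. The treatment $T$ is an intervention on the input: $T=0$ means the intervention alters the surface structure $s$ but preserves the deep structure $d$; $T=1$ means the intervention alters both $s$ and $d$. $s(T=t)$ denotes the value the surface structure takes under treatment $T=t$; it is determined by $T$ (the event $T=t$ entails the surface structure $s(T=t)$). The outcome is $\hat Y = 1$ if the model's output after intervention differs from $Y^{\mathrm{origin}}$ and $\hat Y=0$ if it equals it. There is no confounding between $T$ and $\hat Y$, so $\mathbb{P}(\hat Y=y\mid \mathrm{do}(T=t))=\mathbb{P}(\hat Y=y\mid T=t)$. Monotonicity of $\hat Y$ in $T$ is the standard condition (Tian–Pearl) under which the probability of necessity $\mathrm{PN}=\mathbb{P}(\hat Y'_{T'}\mid T,\hat Y)$ and probability of sufficiency $\mathrm{PS}$ are identified by the displayed formulas; here $\delta_{\mathrm{PN}},\delta_{\mathrm{PS}}$ are evaluated at $(T=0,\hat Y=0)$. *)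

(* Defs.v *)
From HB Require Import structures.
From mathcomp Require Import all_boot all_order all_algebra.
From mathcomp Require Import all_classical all_reals all_analysis.
Set Implicit Arguments. Unset Strict Implicit. Unset Printing Implicit Defensive.
Import Order.TTheory GRing.Theory Num.Theory.
Local Open Scope classical_set_scope.
Local Open Scope ring_scope.

Definition prb d (Omega : measurableType d) (R : realType)
  (P : probability Omega R) (A : set Omega) : R := fine (P A).

Definition cprb d (Omega : measurableType d) (R : realType)
  (P : probability Omega R) (A B : set Omega) : R :=
  prb P (A `&` B) / prb P B.

(* Potential outcome Yhat_t under intervention do(T = t), given the two
   counterfactual outcomes Y0 (under T=0) and Y1 (under T=1). *)
Definition po (Omega : Type) (Y0 Y1 : Omega -> bool) (t : bool) (w : Omega) : bool :=
  if t then Y1 w else Y0 w.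

(* P(Yhat = y | do(T = t)) := P(Yhat_t = y). *)
Definition doP d (Omega : measurableType d) (R : realType)
  (P : probability Omega R) (Y0 Y1 : Omega -> bool) (y t : bool) : R :=
  prb P [set w | po Y0 Y1 t w = y].

(* Main.v *)
Require Import Defs.
From HB Require Import structures.
From mathcomp Require Import all_boot all_order all_algebra.
From mathcomp Require Import all_classical all_reals all_analysis.
From mathcomp Require Import ring lra.
Import Order.TTheory GRing.Theory Num.Theory.
Local Open Scope classical_set_scope.
Local Open Scope ring_scope.

Lemma prb_split d (Omega : measurableType d) (R : realType)
  (P : probability Omega R) (A B : set Omega) :
  measurable A -> measurable B ->
  prb P A = prb P (A `&` B) + prb P (A `&` ~` B).
Proof.
move=> mA mB; rewrite /prb.
have mAB : measurable (A `&` B) by exact: measurableI.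
have mAnB : measurable (A `&` ~` B) by apply: measurableI => //; exact: measurableC.
rewrite -fineD; [|exact: fin_num_measure|exact: fin_num_measure].
rewrite -measureU //; last by rewrite setIACA setICr !setI0.
by rewrite -setIUr setUCr setIT.
Qed.

Theorem theorem1 (d : measure_display) (Omega : measurableType d) (R : realType)
  (P : probability Omega R)
  (T Yh Y0 Y1 : Omega -> bool) (ST : Type) (S : Omega -> ST) (s : bool -> ST)
  (mT : measurable [set w | T w]) (mYh : measurable [set w | Yh w])
  (mY0 : measurable [set w | Y0 w]) (mY1 : measurable [set w | Y1 w])
  (mS : forall t, measurable [set w | S w = s t])
  (* the event T = t entails the surface structure s(T = t) *)
  (hs : forall w t, T w = t -> S w = s t)
  (* consistency: the observed outcome is the potential outcome of the received treatment *)
  (hcons : forall w, Yh w = po Y0 Y1 (T w) w)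
  (* monotonicity (Tian--Pearl): almost surely no unit with Yhat_0 = 1 and Yhat_1 = 0 *)
  (hmono : P [set w | Y0 w && ~~ Y1 w] = 0%E)
  (* no confounding: P(Yhat = y | do(T = t)) = P(Yhat = y | T = t) *)
  (hnoconf : forall y t,
     doP P Y0 Y1 y t = cprb P [set w | Yh w = y] [set w | T w = t])
  (hT1 : prb P [set w | T w = true] = 1 / 2)
  (hT0 : prb P [set w | T w = false] = 1 / 2)
  (hden0 : prb P [set w | T w = false /\ Yh w = false] != 0)
  (hden1 : prb P [set w | T w = true /\ Yh w = true] != 0) :
  let alpha := cprb P [set w | Yh w = true] [set w | T w = true /\ S w = s true] in
  let beta := cprb P [set w | Yh w = false] [set w | T w = false /\ S w = s false] in
  let dADCE := cprb P [set w | Yh w = true] [set w | T w = true /\ S w = s true]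
             - cprb P [set w | Yh w = true] [set w | T w = false /\ S w = s false] in
  let dPN := (prb P [set w | Yh w = false] - doP P Y0 Y1 false true)
             / prb P [set w | T w = false /\ Yh w = false] in
  let dPS := (doP P Y0 Y1 false false - prb P [set w | Yh w = false])
             / prb P [set w | T w = true /\ Yh w = true] in
  dADCE = alpha / 2 * dPS + beta / 2 * dPN.
Proof.
move=> alpha beta dADCE dPN dPS.
have ES t : [set w | T w = t /\ S w = s t] = [set w | T w = t].
  by apply/seteqP; split => w /= => [[]//|h]; split=> //; exact: hs.
have mT' t : measurable [set w | T w = t].
  case: t => //.
  have -> : [set w | T w = false] = ~` [set w | T w] by apply/seteqP; split=> w /=; case: (T w).
  exact: measurableC.
have mY' y : measurable [set w | Yh w = y].
  case: y => //.
  have -> : [set w | Yh w = false] = ~` [set w | Yh w] by apply/seteqP; split=> w /=; case: (Yh w).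
  exact: measurableC.
have I t y : [set w | Yh w = y] `&` [set w | T w = t] = [set w | T w = t /\ Yh w = y].
  by apply/seteqP; split => w /= [].
have I2 t y : [set w | T w = t] `&` ~` [set w | Yh w = y] = [set w | T w = t /\ Yh w = ~~ y].
  by apply/seteqP; split => w /= [->]; case: (Yh w); case: y.
have I3 y t : [set w | Yh w = y] `&` ~` [set w | T w = t] = [set w | T w = ~~ t /\ Yh w = y].
  by apply/seteqP; split => w /= [->]; case: (T w); case: t.
have I4 y t : [set w | T w = t] `&` [set w | Yh w = y] = [set w | T w = t /\ Yh w = y].
  by apply/seteqP; split => w /= [].
have sT t : prb P [set w | T w = t] = prb P [set w | T w = t /\ Yh w = true]
   + prb P [set w | T w = t /\ Yh w = false].
  by rewrite (prb_split _ _ _ P _ _ (mT' t) (mY' true)) I4 I2.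
have sY := prb_split _ _ _ P _ _ (mY' false) (mT' true).
rewrite I I3 /= in sY.
rewrite /dADCE /alpha /beta /dPN /dPS !ES !hnoconf /cprb !I.
move: (sT true) (sT false) hT1 hT0 sY hden0 hden1.
set a := prb P [set w | T w = true /\ Yh w = true].
set c := prb P [set w | T w = true /\ Yh w = false].
set b := prb P [set w | T w = false /\ Yh w = true].
set e := prb P [set w | T w = false /\ Yh w = false].
move=> s1 s0 h1 h0 hY ha he.
rewrite hY h1 h0.
have -> : c = 1/2 - a by rewrite -h1 s1; ring.
have -> : b = 1/2 - e by rewrite -h0 s0; ring.
field.
by rewrite ha he.
Qed.
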